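(* For $n\in\{0,1,2,\dots\}$ let \[ b_n=\frac14\frac{(-1)^n}{n!}\sum_{k=0}^{n}(-1)^kS(n,k)(2k-1)!!,\qquad d_n=\frac{(-1)^n}{n!}\sum_{k=0}^{n}(-1)^kS(n,k)(2k-3)!!, \] so that $d_0=-1$, $d_1=1$, $d_2=0$, $d_3=\frac16$, $b_0=b_1=b_2=\frac14$, and $b_3=\frac7{24}$. For $n\in\mathbb{N}$ let $D^{(n)}=(D_{ij})_{1\le i,j\le n}$ be the $n\times n$ matrix with $D_{ij}=d_{i-j+1}$ if $j\le i$, $D_{i,i+1}=-1$, and $D_{ij}=0$ if $j\ge i+2$. Let $B^{(n)}=(B_{ij})_{1\le i,j\le n}$ be the $n\times n$ matrix with $B_{ij}=b_{i-j+1}$ if $j\le i+1$ and $B_{ij}=0$ if $j\ge i+2$. Then for every $n\in\mathbb{N}$, \[ b_n=\frac14\det D^{(n)}\qquad\text{and}\qquad d_n=(-1)^{n-1}4^n\det B^{(n)}. \]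
   Context: $S(n,k)$ are the Stirling numbers of the second kind, given by $\frac{(e^x-1)^k}{k!}=\sum_{n\ge k}S(n,k)\frac{x^n}{n!}$. Double factorials: $(2j-1)!!=1\cdot3\cdots(2j-1)$ for $j\ge1$, and $[-(2j+1)]!!=(-1)^j/(2j-1)!!$ for $j\ge0$, so $(-1)!!=1$ and $(-3)!!=-1$. *)

(* Defs.v *)
From mathcomp Require Import all_boot all_order all_algebra.
Set Implicit Arguments. Unset Strict Implicit. Unset Printing Implicit Defensive.
Import Order.TTheory GRing.Theory Num.Theory.
Local Open Scope ring_scope.

Fixpoint stirling2 (n k : nat) : nat :=
  match n, k with
  | 0, 0 => 1
  | 0, _.+1 => 0
  | _.+1, 0 => 0
  | n'.+1, k'.+1 => k'.+1 * stirling2 n' k'.+1 + stirling2 n' k'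
  end%N.

Definition oddfact (j : nat) : rat := \prod_(i < j) (2 * i + 1)%:R.

(* dfo m = (2m-1)!! for an integer m, with the convention
   [-(2j+1)]!! = (-1)^j / (2j-1)!!  for j >= 0. *)
Definition dfo (m : int) : rat :=
  match m with
  | Posz j => oddfact j
  | Negz j => (-1) ^+ j.+1 / oddfact j.+1   (* m = -(j+1), so 2m-1 = -(2(j+1)+1) *)
  end.

Definition bcoef (n : nat) : rat :=
  4^-1 * ((-1) ^+ n / (n`!)%:R) *
  \sum_(k < n.+1) (-1) ^+ k * (stirling2 n k)%:R * dfo (k%:Z).

Definition dcoef (n : nat) : rat :=
  ((-1) ^+ n / (n`!)%:R) *
  \sum_(k < n.+1) (-1) ^+ k * (stirling2 n k)%:R * dfo (k%:Z - 1).

(* D^(n), with 0-based indices i,j : 'I_n (paper's i+1, j+1):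
   D_ij = d_{i-j+1} if j <= i, -1 if j = i+1, 0 if j >= i+2. *)
Definition Dmat (n : nat) : 'M[rat]_n :=
  \matrix_(i < n, j < n)
    if (j <= i)%N then dcoef (i - j + 1)%N
    else if j == i.+1 :> nat then -1 else 0.

Definition Bmat (n : nat) : 'M[rat]_n :=
  \matrix_(i < n, j < n)
    if (j <= i.+1)%N then bcoef (i.+1 - j)%N else 0.

(* Main.v *)
Require Import Defs.
From mathcomp Require Import all_boot all_order all_algebra.
From mathcomp Require Import ring.
Set Implicit Arguments. Unset Strict Implicit. Unset Printing Implicit Defensive.
Import Order.TTheory GRing.Theory Num.Theory.
Local Open Scope ring_scope.

Definition U (n k : nat) : rat :=
  (k`!)%:R * (-1) ^+ (n + k) * (stirling2 n k)%:R / (n`!)%:R.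
Definition Phi (f : nat -> rat) n := \sum_(k < n.+1) f k * U n k.
Definition conv (f g : nat -> rat) n := \sum_(a < n.+1) f a * g (n - a)%N.
Definition Dr (f : nat -> rat) n := (n.+1)%:R * f n.+1.
Definition Nm (f : nat -> rat) n := n%:R * f n.

Lemma stir_gt n k : (n < k)%N -> stirling2 n k = 0%N.
Proof.
elim: n k => [|n IH] [|k] //= H.
by rewrite !IH ?muln0 // ltnW.
Qed.

Lemma fact_neq0 n : (n`!)%:R != 0 :> rat.
Proof. by rewrite pnatr_eq0 -lt0n fact_gt0. Qed.

Lemma U_gt n k : (n < k)%N -> U n k = 0.
Proof. by move=> H; rewrite /U stir_gt // mulr0 mul0r. Qed.

Lemma U0 k : U 0 k = (k == 0)%:R.
Proof. case: k => [|k]; by rewrite /U /= ?mulr0 ?mul0r // !mulr1 invr1. Qed.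

Lemma Un0 n : U n.+1 0 = 0.
Proof. by rewrite /U /= mulr0 mul0r. Qed.

Lemma U_rec n k : (n.+1)%:R * U n.+1 k = k%:R * (U n k.-1 - U n k).
Proof.
case: k => [|k]; first by rewrite Un0 mulr0 mul0r.
rewrite /U /= !factS !natrM natrD natrM !addSn !addnS !exprS.
have := fact_neq0 n; have := fact_neq0 k.
have : (n.+1)%:R != 0 :> rat by rewrite pnatr_eq0.
move=> h1 h2 h3. field. by rewrite h3 addrC natr1 h1.
Qed.
Lemma Phi_D f n : Dr (Phi f) n = Phi (Dr f) n - Phi (Nm f) n.
Proof.
rewrite /Dr /Phi mulr_sumr.
rewrite (eq_bigr (fun k : 'I_n.+2 => f k * k%:R * (U n k.-1 - U n k))); last first.
  by move=> k _; rewrite mulrCA U_rec mulrA.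
rewrite big_ord_recl /= mulr0 mul0r add0r.
rewrite (eq_bigr (fun i : 'I_n.+1 => (i.+1%:R * f i.+1) * U n i - (i.+1%:R * f i.+1) * U n i.+1)); last first.
  by move=> i _; rewrite /bump /= add1n add0n; ring.
rewrite sumrB; congr (_ - _).
rewrite big_ord_recr /= U_gt // mulr0 addr0.
rewrite big_ord_recl /= /Nm mul0r mul0r add0r.
by apply: eq_bigr => i _; rewrite /bump /= add1n.
Qed.

Lemma Dr_conv f g n : Dr (conv f g) n = conv (Dr f) g n + conv f (Dr g) n.
Proof.
rewrite /Dr /conv mulr_sumr.
rewrite (eq_bigr (fun a : 'I_n.+2 => a%:R * f a * g (n.+1 - a)%N
   + (n.+1 - a)%:R * f a * g (n.+1 - a)%N)); last first.
  move=> a _; rewrite -mulrDl -mulrDl -natrD subnKC ?mulrA //.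
  by rewrite -ltnS.
rewrite big_split /=; congr (_ + _).
  rewrite big_ord_recl /= !mul0r add0r.
  by apply: eq_bigr => i _; rewrite /bump /= add1n subSS.
rewrite big_ord_recr /= subnn !mul0r addr0.
apply: eq_bigr => i _; rewrite subSn; last by rewrite -ltnS.
by rewrite mulrCA mulrA.
Qed.

Lemma Nm_conv f g n : Nm (conv f g) n = conv (Nm f) g n + conv f (Nm g) n.
Proof.
rewrite /Nm /conv mulr_sumr -big_split /=.
apply: eq_bigr => a _.
have ha : (a <= n)%N by rewrite -ltnS.
rewrite -{1}(subnKC ha) natrD; ring.
Qed.

Lemma Phi_ext f g n : (forall k, f k = g k) -> Phi f n = Phi g n.
Proof. by move=> H; apply: eq_bigr => k _; rewrite H. Qed.

Lemma conv_ext f f' g g' n : (forall k, f k = f' k) -> (forall k, g k = g' k) ->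
  conv f g n = conv f' g' n.
Proof. by move=> H1 H2; apply: eq_bigr => k _; rewrite H1 H2. Qed.

Lemma PhiB f g n : Phi (fun k => f k - g k) n = Phi f n - Phi g n.
Proof. by rewrite /Phi -sumrB; apply: eq_bigr => k _; rewrite mulrBl. Qed.

Lemma PhiD f g n : Phi (fun k => f k + g k) n = Phi f n + Phi g n.
Proof. by rewrite /Phi -big_split; apply: eq_bigr => k _; rewrite mulrDl. Qed.

Lemma convBl f f' g n : conv (fun k => f k - f' k) g n = conv f g n - conv f' g n.
Proof. by rewrite /conv -sumrB; apply: eq_bigr => k _; rewrite mulrBl. Qed.

Lemma convBr f g g' n : conv f (fun k => g k - g' k) n = conv f g n - conv f g' n.
Proof. by rewrite /conv -sumrB; apply: eq_bigr => k _; rewrite mulrBr. Qed.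

Lemma Phi0 f : Phi f 0 = f 0%N.
Proof. by rewrite /Phi big_ord1 U0 mulr1. Qed.

Lemma Phi_conv n : forall f g, conv (Phi f) (Phi g) n = Phi (conv f g) n.
Proof.
elim: n => [|n IH] f g.
  by rewrite /conv big_ord1 !Phi0 big_ord1.
have hn : (n.+1)%:R != 0 :> rat by rewrite pnatr_eq0.
apply: (mulfI hn).
have -> : n.+1%:R * conv (Phi f) (Phi g) n.+1 = Dr (conv (Phi f) (Phi g)) n by [].
have -> : n.+1%:R * Phi (conv f g) n.+1 = Dr (Phi (conv f g)) n by [].
rewrite Dr_conv Phi_D.
rewrite (conv_ext (f' := Phi (fun k => Dr f k - Nm f k)) (g' := Phi g)); last 2 first.
- by move=> k; rewrite Phi_D PhiB.
- by [].
rewrite (conv_ext (g := Dr (Phi g)) (f' := Phi f) (g' := Phi (fun k => Dr g k - Nm g k))); last 2 first.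
- by [].
- by move=> k; rewrite Phi_D PhiB.
rewrite !IH.
rewrite (Phi_ext (f := Dr (conv f g)) (g := fun k => conv (Dr f) g k + conv f (Dr g) k)); last by move=> k; rewrite Dr_conv.
rewrite (Phi_ext (f := Nm (conv f g)) (g := fun k => conv (Nm f) g k + conv f (Nm g) k)); last by move=> k; rewrite Nm_conv.
rewrite (Phi_ext (f := conv (fun k => Dr f k - Nm f k) g) (g := fun k => conv (Dr f) g k - conv (Nm f) g k)); last by move=> k; rewrite convBl.
rewrite (Phi_ext (f := conv f (fun k => Dr g k - Nm g k)) (g := fun k => conv f (Dr g) k - conv f (Nm g) k)); last by move=> k; rewrite convBr.
rewrite !PhiB !PhiD; ring.
Qed.

Lemma conv_zero f g (al be : rat) :
  (forall k, Dr f k = (2 * k%:R + al) * f k) ->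
  (forall k, Dr g k = (2 * k%:R + be) * g k) -> al + be = 0 ->
  forall n, conv f g n.+1 = 0.
Proof.
move=> Hf Hg Hab.
have key : forall n, (n.+1)%:R * conv f g n.+1 = 2 * n%:R * conv f g n.
  move=> n.
  have -> : n.+1%:R * conv f g n.+1 = Dr (conv f g) n by [].
  rewrite Dr_conv /conv -big_split mulr_sumr /=.
  apply: eq_bigr => a _.
  have ha : (a <= n)%N by rewrite -ltnS.
  rewrite Hf Hg.
  have : n%:R = a%:R + (n - a)%:R :> rat by rewrite -natrD subnKC.
  move=> ->.
  have -> : be = - al by apply/eqP; rewrite -addr_eq0 addrC Hab.
  ring.
elim=> [|n IH].
  have := key 0%N; rewrite mulr0 mul0r mul1r; done.
have := key n.+1; rewrite IH mulr0.
move/eqP; rewrite mulf_eq0 pnatr_eq0 /=; by move/eqP.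
Qed.

Definition cc (k : nat) : rat := dfo (k%:Z) / (k`!)%:R.
Definition ee (k : nat) : rat := dfo (k%:Z - 1) / (k`!)%:R.

Lemma oddfactS k : oddfact k.+1 = oddfact k * (2 * k%:R + 1).
Proof. by rewrite /oddfact big_ord_recr /= natrD natrM. Qed.

Lemma dfo_pred k : dfo (k%:Z) = (2 * k%:R - 1) * dfo (k%:Z - 1).
Proof.
case: k => [|k].
  rewrite /dfo /= /oddfact big_ord0 big_ord1 /=.
  rewrite subnn expr1 /= invr1; ring.
have -> : (k.+1%:Z - 1 = k%:Z)%R by rewrite -addn1 PoszD addrK.
rewrite /= oddfactS mulrC; congr (_ * _).
rewrite -natr1; ring.
Qed.

Lemma natS_neq0 k : (1 + k%:R : rat) != 0.
Proof. by rewrite addrC natr1 pnatr_eq0. Qed.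

Lemma Dr_cc k : Dr cc k = (2 * k%:R + 1) * cc k.
Proof.
rewrite /Dr /cc /= oddfactS factS natrM.
have := fact_neq0 k; have : (k.+1)%:R != 0 :> rat by rewrite pnatr_eq0.
move=> h1 h2; field. by rewrite h2 natS_neq0.
Qed.

Lemma Dr_ee k : Dr ee k = (2 * k%:R - 1) * ee k.
Proof.
rewrite /Dr /ee.
have -> : (k.+1%:Z - 1 = k%:Z)%R by rewrite -addn1 PoszD addrK.
rewrite dfo_pred factS natrM.
have := fact_neq0 k; have : (k.+1)%:R != 0 :> rat by rewrite pnatr_eq0.
move=> h1 h2; field. by rewrite h2 natS_neq0.
Qed.

Lemma bcoefE n : bcoef n = 4^-1 * Phi cc n.
Proof.
rewrite /bcoef /Phi -mulrA; congr (_ * _).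
rewrite mulr_sumr; apply: eq_bigr => k _.
rewrite /cc /U exprD.
have := fact_neq0 k; have := fact_neq0 n => h1 h2.
have hs : (-1) ^+ k * (-1) ^+ k = 1 :> rat by rewrite -exprMn mulrNN mulr1 expr1n.
field. by rewrite h1 h2.
Qed.

Lemma dcoefE n : dcoef n = Phi ee n.
Proof.
rewrite /dcoef /Phi mulr_sumr; apply: eq_bigr => k _.
rewrite /ee /U exprD.
have := fact_neq0 k; have := fact_neq0 n => h1 h2.
field. by rewrite h1 h2.
Qed.

Lemma cc0 : cc 0 = 1.
Proof. by rewrite /cc /= /oddfact big_ord0 invr1 mulr1. Qed.

Lemma ee0 : ee 0 = -1.
Proof. by rewrite /ee /= /oddfact big_ord1 /= invr1 !mulr1 expr1. Qed.

Lemma conv_ce n : conv (Phi cc) (Phi ee) n.+1 = 0.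
Proof.
rewrite Phi_conv /Phi big_ord_recl Un0 mulr0 add0r big1 // => i _.
by rewrite (@conv_zero cc ee 1 (-1)) ?mul0r //; first [exact: Dr_cc | exact: Dr_ee | by rewrite addrN].
Qed.

Lemma conv_ec n : conv (Phi ee) (Phi cc) n.+1 = 0.
Proof.
rewrite Phi_conv /Phi big_ord_recl Un0 mulr0 add0r big1 // => i _.
by rewrite (@conv_zero ee cc (-1) 1) ?mul0r //; first [exact: Dr_cc | exact: Dr_ee | by rewrite addNr].
Qed.


Definition Hm (a : nat -> rat) m : 'M[rat]_m :=
  \matrix_(i < m, j < m) if (j <= i.+1)%N then a (i.+1 - j)%N else 0.
Definition Gm (v a : nat -> rat) m : 'M[rat]_m :=
  \matrix_(i < m, j < m) if j == 0%N :> nat then v i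
     else if (j <= i.+1)%N then a (i.+1 - j)%N else 0.

Lemma detG1 v a : \det (Gm v a 1) = v 0%N.
Proof. by rewrite [Gm _ _ _]mx11_scalar det_scalar1 mxE. Qed.

Lemma detG2 v a m : \det (Gm v a m.+2) =
  v 0%N * \det (Hm a m.+1) - a 0%N * \det (Gm (fun i => v i.+1) a m.+1).
Proof.
rewrite (expand_det_row _ ord0) big_ord_recl big_ord_recl big1; last first.
  by move=> i _; rewrite mxE /= mul0r.
rewrite addr0 !mxE /= subnn; congr (_ + _).
  rewrite /cofactor /= expr0 mul1r; congr (_ * \det _).
  by apply/matrixP => i j; rewrite !mxE /= /bump /= !add1n subSS.
rewrite /cofactor /bump /= expr1 mulN1r mulrN; congr (- (_ * \det _)).
apply/matrixP => i j; rewrite !mxE /= /bump /=.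
case: j => [[|j]] //= hj.

Qed.

Lemma detG_sum a m : forall v, \det (Gm v a m.+1) =
  \sum_(k < m.+1) (- a 0%N) ^+ k * v k * \det (Hm a (m - k)).
Proof.
elim: m => [|m IH] v.
  by rewrite detG1 big_ord1 expr0 mul1r det_mx00 mulr1.
rewrite detG2 IH [in RHS]big_ord_recl expr0 mul1r subn0; congr (_ + _).
rewrite mulr_sumr -sumrN; apply: eq_bigr => i _.
rewrite /= /bump add1n subSS exprS; ring.
Qed.

Lemma detH_rec a m : \det (Hm a m.+1) =
  \sum_(k < m.+1) (- a 0%N) ^+ k * a k.+1 * \det (Hm a (m - k)).
Proof.
have -> : Hm a m.+1 = Gm (fun i => a i.+1) a m.+1.
  apply/matrixP => i j; rewrite !mxE.
  case: eqP => [->|] //=.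
by rewrite detG_sum.
Qed.

Lemma dcoef0 : dcoef 0 = -1.
Proof. by rewrite dcoefE Phi0 ee0. Qed.

Lemma bcoef0 : bcoef 0 = 4^-1.
Proof. by rewrite bcoefE Phi0 cc0 mulr1. Qed.

Lemma DmatE n : Dmat n = Hm dcoef n.
Proof.
apply/matrixP => i j; rewrite !mxE.
case: (leqP j i) => hji.
  by rewrite (leq_trans hji) // addn1 subSn.
case: eqP => [->|hne]; first by rewrite leqnn subnn dcoef0.
by rewrite leqNgt ltn_neqAle hji andbT; case: eqP => // /esym.
Qed.

Lemma detD n : \det (Dmat n) = 4 * bcoef n.
Proof.
elim/ltn_ind: n => [[|m]] IH.
  by rewrite det_mx00 bcoef0 mulfV.
rewrite DmatE detH_rec dcoef0 opprK.
have := conv_ec m; rewrite /conv big_ord_recl subn0 /= Phi0 ee0 mulN1r => H.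
have h4 : (4 : rat) != 0 by [].
have hb k : 4 * bcoef k = Phi cc k by rewrite bcoefE mulrA mulfV // mul1r.
rewrite hb.
apply/eqP; rewrite -subr_eq0 addrC; apply/eqP; rewrite -[RHS]H; congr (_ + _).
apply: eq_bigr => i _.
rewrite expr1n mul1r -mulrA -DmatE IH; last by rewrite ltnS leq_subr.
rewrite hb /= /bump add1n subSS mulrA; congr (_ * _); exact: dcoefE.
Qed.

Lemma BmatE n : Bmat n = Hm bcoef n.
Proof. by []. Qed.

Lemma detB n : \det (Bmat n) = - (- 4^-1) ^+ n * dcoef n.
Proof.
elim/ltn_ind: n => [[|m]] IH.
  by rewrite det_mx00 dcoef0 expr0 mulrN1 opprK.
rewrite BmatE detH_rec bcoef0.
have := conv_ce m; rewrite /conv big_ord_recl subn0 /= Phi0 cc0 mul1r => H.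
have HS : \sum_(i < m.+1) Phi cc i.+1 * Phi ee (m - i)%N = - Phi ee m.+1.
  apply/eqP; rewrite -addr_eq0 addrC; apply/eqP; rewrite -[RHS]H; congr (_ + _).
rewrite (eq_bigr (fun i : 'I_m.+1 => - (-4^-1)^+m * 4^-1 * (Phi cc i.+1 * Phi ee (m - i)%N))); last first.
  move=> i _.
  have hi : (i <= m)%N by rewrite -ltnS.
  rewrite -BmatE IH; last by rewrite ltnS leq_subr.
  have -> : (- 4^-1 : rat) ^+ m = (- 4^-1) ^+ i * (- 4^-1) ^+ (m - i) by rewrite -exprD subnKC.
  rewrite bcoefE dcoefE; ring.
rewrite -mulr_sumr HS dcoefE exprS; ring.
Qed.

Theorem theorem6p5 (n : nat) (hn : (0 < n)%N) :
  bcoef n = 4^-1 * \det (Dmat n) /\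
  dcoef n = (-1) ^+ n.-1 * 4 ^+ n * \det (Bmat n).
Proof.
split.
  by rewrite detD mulrA mulVf // mul1r.
case: n hn => [//|m] _.
have e : (- 4^-1 : rat)^+m.+1 = (-1)^+m.+1 * (4^-1)^+m.+1 by rewrite -exprMn mulN1r.
rewrite detB /= e (exprS (-1) m).
have h4 : (4 : rat) ^+ m.+1 * (4^-1) ^+ m.+1 = 1 by rewrite -exprMn mulfV // expr1n.
have hs : ((-1) ^+ m * (-1) ^+ m : rat) = 1 by rewrite -exprMn mulrNN mulr1 expr1n.
transitivity (((-1)^+m * (-1)^+m) * (4^+m.+1 * (4^-1)^+m.+1) * dcoef m.+1 : rat).
  by rewrite hs h4 !mul1r.
ring.
Qed.
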